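(* Let $f:G\to H$ be a surjective group homomorphism with kernel $K$, and let $L\subset K$ be a subset whose normal closure in $G$ is $K$. Then $\ker\big(f^\#:\kappa G^\#\to\kappa H^\#\big)=L^\#$.
   Context: Let $\kappa$ be a field of characteristic $0$. For a group $G$, let $*:\kappa G\to\kappa G$ be the $\kappa$-linear map with $g^*=g^{-1}$ for $g\in G$, and $(\kappa G)^*$ its fixed points. $A_G$ is the quotient of $\kappa G$ by the two-sided ideal generated by all $ab-ba$ with $a\in\kappa G$, $b\in(\kappa G)^*$; $*$ descends to $A_G$, and $\kappa G^\#=\{x\in A_G:x^*=x\}$ (a commutative subring of the centre of $A_G$). Group elements are identified with their images in $A_G$, and $\bar x=\tfrac12(x+x^* )$ for $x\in A_G$. A group homomorphism $f:G\to H$ induces a ring homomorphism $A_G\to A_H$ commuting with $*$; $f^\#$ is its restriction to $\kappa G^\#\to\kappa H^\#$. For a subset $L\subset G$, $L^\#$ is the ideal of $\kappa G^\#$ generated by $\{\overline{xl}-\bar x : x\in A_G,\ l\in L\}$ (equivalently, by $\{\overline{bl}-\bar b: b\in B, l\in L\}$ for any generating set $B$ of $A_G$ as a $\kappa G^\#$-module). *)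

(* Defs.v *)
(* Groups are arbitrary (possibly infinite) groups:
   mathcomp's [groupType] (boot/monoid.v), which carries a choice/eq structure. *)
From HB Require Import structures.
From mathcomp Require Import all_boot all_order all_algebra.
Set Implicit Arguments. Unset Strict Implicit. Unset Printing Implicit Defensive.
Import GRing.Theory.
Local Open Scope ring_scope.

Section GroupAlgebra.
Variables (K : fieldType) (G : groupType).

(* An element of the group algebra K G is represented by a formal finite sum
   sum_i c_i g_i, i.e. a list of pairs (g_i, c_i).  Two representatives denote
   the same element of K G iff they have the same coefficient function. *)
Definition kG := seq (G * K).

Definition coef (x : kG) (g : G) : K := \sum_(p <- x | p.1 == g) p.2.

Definition kGeq (x y : kG) : Prop := forall g, coef x g = coef y g.

Definition kGadd (x y : kG) : kG := x ++ y.
Definition kGscale (c : K) (x : kG) : kG := [seq (p.1, c * p.2) | p <- x].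
Definition kGsub (x y : kG) : kG := kGadd x (kGscale (-1) y).
Definition kGmul (x y : kG) : kG :=
  [seq ((p.1 * q.1)%g, p.2 * q.2) | p <- x, q <- y].
Definition kGstar (x : kG) : kG := [seq ((p.1)^-1%g, p.2) | p <- x].
Definition kGof (g : G) : kG := [:: (g, 1)].

Definition selfadj (b : kG) : Prop := kGeq (kGstar b) b.

Definition kGcomm (a b : kG) : kG := kGsub (kGmul a b) (kGmul b a).

(* x lies in the two-sided ideal of K G generated by all a b - b a,
   a in K G, b in (K G)^*:  x = sum_i u_i (a_i b_i - b_i a_i) v_i. *)
Definition inI (x : kG) : Prop :=
  exists t : seq (kG * kG * kG * kG),
    (forall q, q \in t -> selfadj q.1.2) /\
    kGeq x (flatten [seq kGmul (kGmul q.1.1.1 (kGcomm q.1.1.2 q.1.2)) q.2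
                    | q <- t]).

Definition AGeq (x y : kG) : Prop := inI (kGsub x y).

(* (the class of) x lies in K G^# = { x in A_G | x^* = x } *)
Definition sharp (x : kG) : Prop := AGeq (kGstar x) x.

Definition kGbar (x : kG) : kG := kGscale (2%:R^-1) (kGadd x (kGstar x)).

(* the class of x lies in L^#, the ideal of the ring K G^# generated by
   { bar(x l) - bar(x) : x in A_G, l in L } :
   x = sum_i r_i (bar(y_i l_i) - bar(y_i)) in A_G with r_i in K G^#. *)
Definition inLsharp (L : G -> Prop) (x : kG) : Prop :=
  exists t : seq (kG * kG * G),
    (forall q, q \in t -> sharp q.1.1 /\ L q.2) /\
    AGeq x (flatten [seq kGmul q.1.1
                        (kGsub (kGbar (kGmul q.1.2 (kGof q.2))) (kGbar q.1.2))
                    | q <- t]).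

Definition normal_closure (L : G -> Prop) (g : G) : Prop :=
  forall N : G -> Prop,
    N 1%g ->
    (forall x y, N x -> N y -> N (x * y^-1)%g) ->
    (forall x y, N x -> N (x ^ y)%g) ->
    (forall l, L l -> N l) -> N g.

End GroupAlgebra.

Definition kGmap (K : fieldType) (G H : groupType) (f : G -> H) (x : kG K G)
  : kG K H := [seq (f p.1, p.2) | p <- x].

(* Main.v *)
Require Import Defs.
From HB Require Import structures.
From mathcomp Require Import all_boot all_order all_algebra.
From Stdlib Require Import Setoid Morphisms.
From mathcomp Require Import ring.
Set Implicit Arguments. Unset Strict Implicit. Unset Printing Implicit Defensive.
Import GRing.Theory.
Local Open Scope ring_scope.

Section Tool.
Variables (K : fieldType) (G : groupType).
Local Notation kG := (kG K G).
Implicit Types (x y z : kG) (F : G -> K).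

Definition ev F x : K := \sum_(p <- x) p.2 * F p.1.

Lemma ev_nil F : ev F [::] = 0. Proof. by rewrite /ev big_nil. Qed.
Lemma ev_cons F p x : ev F (p :: x) = p.2 * F p.1 + ev F x.
Proof. by rewrite /ev big_cons. Qed.
Lemma ev_cat F x y : ev F (x ++ y) = ev F x + ev F y.
Proof. by rewrite /ev big_cat. Qed.
Lemma ev_scale F c x : ev F (kGscale c x) = c * ev F x.
Proof. by rewrite /ev /kGscale big_map mulr_sumr; apply: eq_bigr => p _ /=; rewrite mulrA. Qed.
Lemma ev_star F x : ev F (kGstar x) = ev (fun g => F g^-1%g) x.
Proof. by rewrite /ev /kGstar big_map. Qed.
Lemma ev_mul F x y : ev F (kGmul x y) = ev (fun g => ev (fun h => F (g * h)%g) y) x.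
Proof.
rewrite /ev /kGmul big_allpairs_dep; apply: eq_bigr => p _.
by rewrite mulr_sumr; apply: eq_bigr => q _ /=; rewrite mulrA.
Qed.
Lemma ev_of F g : ev F (kGof K g) = F g.
Proof. by rewrite /ev /kGof big_seq1 mul1r. Qed.
Lemma ev_flatten F (s : seq kG) : ev F (flatten s) = \sum_(z <- s) ev F z.
Proof. by rewrite /ev big_flatten. Qed.
Lemma ev_sub F x y : ev F (kGsub x y) = ev F x - ev F y.
Proof. by rewrite /kGsub ev_cat ev_scale mulN1r. Qed.
Lemma ev_comm F x y : ev F (kGcomm x y) = ev F (kGmul x y) - ev F (kGmul y x).
Proof. by rewrite ev_sub. Qed.
Lemma ev_bar F x : ev F (kGbar x) = 2%:R^-1 * (ev F x + ev F (kGstar x)).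
Proof. by rewrite /kGbar ev_scale ev_cat. Qed.

Lemma eq_ev F F' x : (forall g, F g = F' g) -> ev F x = ev F' x.
Proof. by move=> e; apply: eq_bigr => p _; rewrite e. Qed.
Lemma ev_addF F F' x : ev (fun g => F g + F' g) x = ev F x + ev F' x.
Proof. by rewrite /ev -big_split; apply: eq_bigr => p _; rewrite mulrDr. Qed.
Lemma ev_scaleF c F x : ev (fun g => c * F g) x = c * ev F x.
Proof. by rewrite /ev mulr_sumr; apply: eq_bigr => p _; rewrite mulrCA. Qed.
Lemma ev_oppF F x : ev (fun g => - F g) x = - ev F x.
Proof. by rewrite /ev -sumrN; apply: eq_bigr => p _; rewrite mulrN. Qed.
Lemma ev_0F x : ev (fun _ => 0) x = 0.
Proof. by rewrite /ev big1 // => p _; rewrite mulr0. Qed.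

Lemma coef_ev x g : coef x g = ev (fun h => (h == g)%:R) x.
Proof.
rewrite /coef /ev big_mkcond; apply: eq_bigr => p _.
by case: eqP => _; rewrite ?mulr1 ?mulr0.
Qed.

Lemma ev_coef F x (S : seq G) : uniq S -> {subset unzip1 x <= S} ->
  ev F x = \sum_(h <- S) coef x h * F h.
Proof.
move=> uS; elim: x => [|p x IH] sub.
  by rewrite ev_nil big1 // => h _; rewrite /coef big_nil mul0r.
have p1S : p.1 \in S by apply: sub; rewrite inE eqxx.
rewrite ev_cons IH; last by move=> h hx; apply: sub; rewrite inE hx orbT.
have -> : \sum_(h <- S) coef (p :: x) h * F h =
   \sum_(h <- S) ((if p.1 == h then p.2 else 0) * F h) + \sum_(h <- S) coef x h * F h.
  by rewrite -big_split; apply: eq_bigr => h _; rewrite /coef big_cons /=; case: eqP => _; rewrite ?add0r ?mul0r ?add0r // mulrDl.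
congr (_ + _); rewrite (bigD1_seq p.1) //= eqxx big1 ?addr0 // => h.
by rewrite eq_sym => /negbTE ->; rewrite mul0r.
Qed.

Lemma kGeqP x y : kGeq x y <-> forall F, ev F x = ev F y.
Proof.
split; last by move=> e g; rewrite !coef_ev.
move=> e F.
set S := undup (unzip1 x ++ unzip1 y).
have uS : uniq S by exact: undup_uniq.
rewrite (@ev_coef F x S uS) ?(@ev_coef F y S uS).
- by apply: eq_bigr => h _; rewrite e.
- by move=> h hy; rewrite mem_undup mem_cat hy orbT.
- by move=> h hx; rewrite mem_undup mem_cat hx.
Qed.


Lemma ev_sumF (I : Type) (r : seq I) (Phi : I -> G -> K) x :
  ev (fun g => \sum_(i <- r) Phi i g) x = \sum_(i <- r) ev (Phi i) x.
Proof.
elim: r => [|i r IH].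
  rewrite big_nil; transitivity (ev (fun _ => 0) x); last exact: ev_0F.
  by apply: eq_ev => g; rewrite big_nil.
by rewrite big_cons -IH -ev_addF; apply: eq_ev => g; rewrite big_cons.
Qed.

Lemma ev_swap x y (Phi : G -> G -> K) :
  ev (fun g => ev (fun h => Phi g h) y) x = ev (fun h => ev (fun g => Phi g h) x) y.
Proof.
rewrite /ev.
transitivity (\sum_(p <- x) \sum_(q <- y) p.2 * q.2 * Phi p.1 q.1).
  by apply: eq_bigr => p _; rewrite mulr_sumr; apply: eq_bigr => q _; rewrite mulrA.
rewrite exchange_big; apply: eq_bigr => q _; rewrite mulr_sumr; apply: eq_bigr => p _.
by rewrite mulrCA mulrA.
Qed.

Definition kGeqE := kGeqP.

Lemma kGeq_refl x : kGeq x x. Proof. by []. Qed.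
Lemma kGeq_sym x y : kGeq x y -> kGeq y x. Proof. by move=> e g; rewrite e. Qed.
Lemma kGeq_trans x y z : kGeq x y -> kGeq y z -> kGeq x z.
Proof. by move=> e1 e2 g; rewrite e1 e2. Qed.

#[global] Instance kGeq_Equiv : Equivalence (@kGeq K G).
Proof. split; [exact: kGeq_refl | exact: kGeq_sym | exact: kGeq_trans]. Qed.

#[global] Instance mul_Proper : Proper (@kGeq K G ==> @kGeq K G ==> @kGeq K G) (@kGmul K G).
Proof.
move=> x x' /kGeqP ex y y' /kGeqP ey; apply/kGeqP => F.
rewrite !ev_mul ex; apply: eq_ev => g; exact: ey.
Qed.
#[global] Instance cat_Proper : Proper (@kGeq K G ==> @kGeq K G ==> @kGeq K G) (@cat (G * K)).
Proof. by move=> x x' /kGeqP ex y y' /kGeqP ey; apply/kGeqP => F; rewrite !ev_cat ex ey. Qed.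
#[global] Instance scale_Proper c : Proper (@kGeq K G ==> @kGeq K G) (@kGscale K G c).
Proof. by move=> x x' /kGeqP ex; apply/kGeqP => F; rewrite !ev_scale ex. Qed.
#[global] Instance star_Proper : Proper (@kGeq K G ==> @kGeq K G) (@kGstar K G).
Proof. by move=> x x' /kGeqP ex; apply/kGeqP => F; rewrite !ev_star ex. Qed.
#[global] Instance sub_Proper : Proper (@kGeq K G ==> @kGeq K G ==> @kGeq K G) (@kGsub K G).
Proof. by move=> x x' /kGeqP ex y y' /kGeqP ey; apply/kGeqP => F; rewrite !ev_sub ex ey. Qed.
#[global] Instance comm_Proper : Proper (@kGeq K G ==> @kGeq K G ==> @kGeq K G) (@kGcomm K G).
Proof. by move=> x x' ex y y' ey; rewrite /kGcomm ex ey. Qed.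
#[global] Instance bar_Proper : Proper (@kGeq K G ==> @kGeq K G) (@kGbar K G).
Proof. by move=> x x' ex; rewrite /kGbar ex. Qed.
#[global] Instance inI_Proper : Proper (@kGeq K G ==> iff) (@inI K G).
Proof.
move=> x x' ex; split=> -[t [ht e]]; exists t; split=> //.
  by rewrite -ex. by rewrite ex.
Qed.
#[global] Instance AGeq_Proper : Proper (@kGeq K G ==> @kGeq K G ==> iff) (@AGeq K G).
Proof. by move=> x x' ex y y' ey; rewrite /AGeq ex ey. Qed.

Lemma mulA x y z : kGeq (kGmul (kGmul x y) z) (kGmul x (kGmul y z)).
Proof.
apply/kGeqP => F; rewrite !ev_mul; apply: eq_ev => g.
by rewrite ev_mul; apply: eq_ev => h; apply: eq_ev => k; rewrite mulgA.
Qed.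
Lemma mul_catl x y z : kGmul (x ++ y) z = kGmul x z ++ kGmul y z.
Proof. by rewrite /kGmul allpairs_cat. Qed.
Lemma mul_catr x y z : kGeq (kGmul x (y ++ z)) (kGmul x y ++ kGmul x z).
Proof. by apply/kGeqP => F; rewrite ev_cat !ev_mul -ev_addF; apply: eq_ev => g; rewrite ev_cat. Qed.
Lemma mul_scalel c x y : kGeq (kGmul (kGscale c x) y) (kGscale c (kGmul x y)).
Proof. by apply/kGeqP => F; rewrite ev_scale !ev_mul ev_scale. Qed.
Lemma mul_scaler c x y : kGeq (kGmul x (kGscale c y)) (kGscale c (kGmul x y)).
Proof. by apply/kGeqP => F; rewrite ev_scale !ev_mul -ev_scaleF; apply: eq_ev => g; rewrite ev_scale. Qed.
Lemma star_mul x y : kGeq (kGstar (kGmul x y)) (kGmul (kGstar y) (kGstar x)).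
Proof.
apply/kGeqP => F; rewrite ev_star !ev_mul ev_star ev_swap; apply: eq_ev => g.
by rewrite ev_star; apply: eq_ev => h; rewrite invgM.
Qed.
Lemma star_star x : kGeq (kGstar (kGstar x)) x.
Proof. by apply/kGeqP => F; rewrite !ev_star; apply: eq_ev => g; rewrite invgK. Qed.
Lemma star_cat x y : kGstar (x ++ y) = kGstar x ++ kGstar y.
Proof. by rewrite /kGstar map_cat. Qed.
Lemma star_scale c x : kGeq (kGstar (kGscale c x)) (kGscale c (kGstar x)).
Proof. by apply/kGeqP => F; rewrite !ev_star !ev_scale ev_star. Qed.
Lemma kmul1l x : kGeq (kGmul (kGof K 1%g) x) x.
Proof. by apply/kGeqP => F; rewrite ev_mul ev_of; apply: eq_ev => g; rewrite mul1g. Qed.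
Lemma kmul1r x : kGeq (kGmul x (kGof K 1%g)) x.
Proof. by apply/kGeqP => F; rewrite ev_mul; apply: eq_ev => g; rewrite ev_of mulg1. Qed.
Lemma cat_comm x y : kGeq (x ++ y) (y ++ x).
Proof. by apply/kGeqP => F; rewrite !ev_cat addrC. Qed.
Lemma scale_cat c x y : kGscale c (x ++ y) = kGscale c x ++ kGscale c y.
Proof. by rewrite /kGscale map_cat. Qed.
Lemma scale_scale c d x : kGeq (kGscale c (kGscale d x)) (kGscale (c * d) x).
Proof. by apply/kGeqP => F; rewrite !ev_scale mulrA. Qed.
Lemma scale1 x : kGeq (kGscale 1 x) x.
Proof. by apply/kGeqP => F; rewrite !ev_scale mul1r. Qed.
Lemma sub_self x : kGeq (kGsub x x) [::].
Proof. by apply/kGeqP => F; rewrite ev_sub ev_nil subrr. Qed.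

Lemma flatten_eq (I : eqType) (r : seq I) (A B : I -> kG) :
  (forall i, i \in r -> kGeq (A i) (B i)) ->
  kGeq (flatten (map A r)) (flatten (map B r)).
Proof.
elim: r => [|i r IH] e //=.
rewrite (e i (mem_head _ _)) IH //.
by move=> j jr; apply: e; rewrite inE jr orbT.
Qed.

Lemma mul_nil x : kGeq (kGmul x [::]) [::].
Proof. by apply/kGeqP => F; rewrite ev_mul ev_nil -(ev_0F x); apply: eq_ev => g; rewrite ev_nil. Qed.
Lemma mul_nill x : kGmul [::] x = [::].
Proof. by []. Qed.

Lemma mul_flatten w (s : seq kG) :
  kGeq (kGmul w (flatten s)) (flatten (map (kGmul w) s)).
Proof.
elim: s => [|z s IH] /=; first exact: mul_nil.
by rewrite mul_catr IH.
Qed.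
Lemma mul_flattenl w (s : seq kG) :
  kGmul (flatten s) w = flatten (map (fun z => kGmul z w) s).
Proof. by elim: s => [|z s IH] //=; rewrite mul_catl IH. Qed.
Lemma star_flatten (s : seq kG) : kGstar (flatten s) = flatten (map (@kGstar K G) s).
Proof. by rewrite /kGstar map_flatten. Qed.
Lemma scale_flatten c (s : seq kG) : kGscale c (flatten s) = flatten (map (kGscale c) s).
Proof. by rewrite /kGscale map_flatten. Qed.

Definition Pg (q : kG * kG * kG * kG) : kG :=
  kGmul (kGmul q.1.1.1 (kGcomm q.1.1.2 q.1.2)) q.2.

Lemma inIE z : inI z <-> exists t, (forall q, q \in t -> selfadj q.1.2) /\ kGeq z (flatten (map Pg t)).
Proof. by []. Qed.

Lemma inI0 z : kGeq z [::] -> inI z.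
Proof. by move=> e; exists [::]; split. Qed.

Lemma inI_cat z1 z2 : inI z1 -> inI z2 -> inI (z1 ++ z2).
Proof.
move=> [t1 [h1 e1]] [t2 [h2 e2]]; exists (t1 ++ t2); split.
  by move=> q; rewrite mem_cat => /orP[/h1|/h2].
by rewrite map_cat flatten_cat e1 e2.
Qed.

Lemma inI_mull w z : inI z -> inI (kGmul w z).
Proof.
move=> [t [h e]]; exists (map (fun q => (kGmul w q.1.1.1, q.1.1.2, q.1.2, q.2)) t); split.
  by move=> q /mapP [q' q't ->]; exact: (h q' q't).
rewrite e mul_flatten -!map_comp; apply: flatten_eq => q _ /=.
by rewrite /Pg /= !mulA.
Qed.

Lemma inI_mulr w z : inI z -> inI (kGmul z w).
Proof.
move=> [t [h e]]; exists (map (fun q => (q.1.1.1, q.1.1.2, q.1.2, kGmul q.2 w)) t); split.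
  by move=> q /mapP [q' q't ->]; exact: (h q' q't).
rewrite e mul_flattenl -!map_comp; apply: flatten_eq => q _ /=.
by rewrite /Pg /= !mulA.
Qed.

Lemma inI_scale c z : inI z -> inI (kGscale c z).
Proof.
move=> hz; have -> : kGeq (kGscale c z) (kGmul (kGscale c (kGof K 1%g)) z).
  by rewrite mul_scalel kmul1l.
exact: inI_mull.
Qed.

Lemma star_comm (a b : kG) : selfadj b ->
  kGeq (kGstar (kGcomm a b)) (kGscale (-1) (kGcomm (kGstar a) b)).
Proof.
move=> hb; have hb' : kGeq (kGstar b) b := hb.
rewrite /kGcomm /kGsub star_cat star_scale !star_mul hb' scale_cat.
rewrite scale_scale mulN1r opprK scale1 cat_comm; reflexivity.
Qed.

Lemma inI_star z : inI z -> inI (kGstar z).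
Proof.
move=> [t [h e]].
exists (map (fun q => (kGscale (-1) (kGstar q.2), kGstar q.1.1.2, q.1.2, kGstar q.1.1.1)) t); split.
  by move=> q /mapP [q' q't ->]; exact: (h q' q't).
rewrite e star_flatten -!map_comp; apply: flatten_eq => q qt /=.
rewrite /Pg /= !star_mul star_comm; last exact: h.
rewrite !mulA !mul_scalel !mul_scaler; reflexivity.
Qed.

Lemma ev_mulcatl F x y z : ev F (kGmul (x ++ y) z) = ev F (kGmul x z) + ev F (kGmul y z).
Proof. by rewrite mul_catl ev_cat. Qed.
Lemma ev_mulcatr F x y z : ev F (kGmul x (y ++ z)) = ev F (kGmul x y) + ev F (kGmul x z).
Proof. by rewrite -ev_cat; move: F; apply/kGeqP; rewrite mul_catr. Qed.
Lemma ev_starmul F x y : ev F (kGstar (kGmul x y)) = ev F (kGmul (kGstar y) (kGstar x)).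
Proof. by move: F; apply/kGeqP; rewrite star_mul. Qed.
Lemma ev_mulscalel F c x y : ev F (kGmul (kGscale c x) y) = c * ev F (kGmul x y).
Proof. by rewrite -ev_scale; move: F; apply/kGeqP; rewrite mul_scalel. Qed.
Lemma ev_mulscaler F c x y : ev F (kGmul x (kGscale c y)) = c * ev F (kGmul x y).
Proof. by rewrite -ev_scale; move: F; apply/kGeqP; rewrite mul_scaler. Qed.

Definition tw (z : kG) : kG := z ++ kGstar z.
Lemma selfadj_tw z : selfadj (tw z).
Proof. by rewrite /selfadj /tw star_cat star_star cat_comm. Qed.
Lemma selfadj_bar z : selfadj (kGbar z).
Proof. by rewrite /selfadj /kGbar star_scale; have := selfadj_tw z; rewrite /selfadj /tw => ->. Qed.

Lemma inI_commS (y s : kG) : selfadj s -> inI (kGcomm y s).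
Proof.
move=> hs; exists [:: (kGof K 1%g, y, s, kGof K 1%g)]; split.
  by move=> q; rewrite inE => /eqP ->.
by rewrite /= cats0 kmul1r kmul1l.
Qed.

Lemma cyc_identity (a b : kG) :
  kGeq (kGsub (kGbar (kGmul a b)) (kGbar (kGmul b a)))
       (kGscale (2%:R^-1) (kGcomm (tw b) (tw a) ++ kGcomm a (tw b) ++
                          kGscale (-1) (kGcomm b (tw a)))).
Proof.
apply/kGeqP => F.
rewrite /tw ?(ev_sub, ev_cat, ev_scale, ev_bar, ev_comm, ev_mulcatl, ev_mulcatr, ev_starmul).
ring.
Qed.

Lemma inI_cyc (a b : kG) : inI (kGsub (kGbar (kGmul a b)) (kGbar (kGmul b a))).
Proof.
rewrite cyc_identity; apply: inI_scale; apply: inI_cat; first exact/inI_commS/selfadj_tw.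
apply: inI_cat; first exact/inI_commS/selfadj_tw.
by apply: inI_scale; apply/inI_commS/selfadj_tw.
Qed.

Lemma ev_mul_of F x w : ev F (kGmul x (kGof K w)) = ev (fun g => F (g * w)%g) x.
Proof. by rewrite ev_mul; apply: eq_ev => g; rewrite ev_of. Qed.
Lemma ev_mul_ofl F x w : ev F (kGmul (kGof K w) x) = ev (fun g => F (w * g)%g) x.
Proof. by rewrite ev_mul ev_of. Qed.

Lemma AGeq_inI x y : AGeq x y <-> inI (kGsub x y). Proof. by []. Qed.
Lemma AGeq_eq x y : kGeq x y -> AGeq x y.
Proof. by move=> e; apply: inI0; rewrite e sub_self. Qed.
Lemma AGeq_trans x y z : AGeq x y -> AGeq y z -> AGeq x z.
Proof.
move=> h1 h2; have e : kGeq (kGsub x z) (kGsub x y ++ kGsub y z).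
  by apply/kGeqP => F; rewrite ev_cat !ev_sub; ring.
by rewrite /AGeq e; apply: inI_cat.
Qed.
Lemma AGeq_cat x1 y1 x2 y2 : AGeq x1 y1 -> AGeq x2 y2 -> AGeq (x1 ++ x2) (y1 ++ y2).
Proof.
move=> h1 h2; have e : kGeq (kGsub (x1 ++ x2) (y1 ++ y2)) (kGsub x1 y1 ++ kGsub x2 y2).
  by apply/kGeqP => F; rewrite ?(ev_sub, ev_cat, ev_scale); ring.
by rewrite /AGeq e; apply: inI_cat.
Qed.

Variable L : G -> Prop.

Definition Pl (q : kG * kG * G) : kG :=
  kGmul q.1.1 (kGsub (kGbar (kGmul q.1.2 (kGof K q.2))) (kGbar q.1.2)).

Lemma inLsE x : inLsharp L x <->
  exists t, (forall q, q \in t -> sharp q.1.1 /\ L q.2) /\ AGeq x (flatten (map Pl t)).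
Proof. by []. Qed.

Lemma inLs_AG x y : inLsharp L y -> AGeq x y -> inLsharp L x.
Proof. by move=> [t [h e]] e'; exists t; split=> //; apply: AGeq_trans e' e. Qed.
Lemma inLs_cat x y : inLsharp L x -> inLsharp L y -> inLsharp L (x ++ y).
Proof.
move=> [t1 [h1 e1]] [t2 [h2 e2]]; exists (t1 ++ t2); split.
  by move=> q; rewrite mem_cat => /orP[/h1|/h2].
by rewrite map_cat flatten_cat; apply: AGeq_cat.
Qed.
Lemma inLs_I x : inI x -> inLsharp L x.
Proof.
move=> hx; exists [::]; split=> //=.
by rewrite /AGeq; have -> : kGeq (kGsub x [::]) x by apply/kGeqP => F; rewrite ev_sub ev_nil subr0.
Qed.
Lemma inLs_eq x y : inLsharp L y -> kGeq x y -> inLsharp L x.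
Proof. by move=> h e; apply: inLs_AG h _; apply: AGeq_eq. Qed.

Lemma sharp1 : sharp (kGof K (1%g : G)).
Proof. by apply: AGeq_eq; rewrite /kGstar /kGof /= invg1. Qed.

Lemma inLs_gen y l : L l -> inLsharp L (Pl (kGof K 1%g, y, l)).
Proof.
move=> hl; exists [:: (kGof K 1%g, y, l)]; split.
  by move=> q; rewrite inE => /eqP -> /=; split=> //; exact: sharp1.
by apply: AGeq_eq; rewrite /= cats0.
Qed.

Definition Nset z := forall y, inLsharp L (kGbar (kGmul y z)).

Lemma bar_cat x y : kGeq (kGbar (x ++ y)) (kGbar x ++ kGbar y).
Proof. by apply/kGeqP => F; rewrite !ev_cat !ev_bar star_cat !ev_cat; ring. Qed.
Lemma bar_sub x y : kGeq (kGbar (kGsub x y)) (kGsub (kGbar x) (kGbar y)).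
Proof.
apply/kGeqP => F; rewrite !ev_sub !ev_bar /kGsub star_cat ev_cat.
rewrite ?(ev_scale, ev_star, ev_cat).
ring.
Qed.

Lemma N_eq z z' : Nset z -> kGeq z z' -> Nset z'.
Proof. by move=> h e y; apply: inLs_eq (h y) _; rewrite e. Qed.
Lemma N_nil : Nset [::].
Proof.
move=> y; apply/inLs_I/inI0; rewrite mul_nil; apply/kGeqP => F.
by rewrite ev_bar ?(ev_star, ev_nil) addr0 mulr0.
Qed.
Lemma N_cat z1 z2 : Nset z1 -> Nset z2 -> Nset (z1 ++ z2).
Proof. by move=> h1 h2 y; apply: inLs_eq (inLs_cat (h1 y) (h2 y)) _; rewrite mul_catr bar_cat. Qed.
Lemma N_mull w z : Nset z -> Nset (kGmul w z).
Proof. by move=> h y; apply: inLs_eq (h (kGmul y w)) _; rewrite mulA. Qed.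
Lemma N_mulr w z : Nset z -> Nset (kGmul z w).
Proof.
move=> h y; apply: inLs_AG (h (kGmul w y)) _.
apply: (@AGeq_trans _ (kGbar (kGmul (kGmul y z) w))); first by apply: AGeq_eq; rewrite mulA.
apply: (@AGeq_trans _ (kGbar (kGmul w (kGmul y z)))); first exact: inI_cyc.
by apply: AGeq_eq; rewrite mulA.
Qed.
Lemma N_scale c z : Nset z -> Nset (kGscale c z).
Proof.
move=> h; apply: (@N_eq (kGmul (kGscale c (kGof K 1%g)) z)); first exact: N_mull.
by rewrite mul_scalel kmul1l.
Qed.
Lemma N_sub z1 z2 : Nset z1 -> Nset z2 -> Nset (kGsub z1 z2).
Proof. by move=> h1 h2; apply: N_cat h1 (N_scale _ h2). Qed.
Lemma N_I z : inI z -> Nset z.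
Proof.
move=> hz y; apply: inLs_I; apply: inI_scale; apply: inI_cat; first exact: inI_mull.
by apply/inI_star/inI_mull.
Qed.

Lemma mul_subr x y z : kGeq (kGmul x (kGsub y z)) (kGsub (kGmul x y) (kGmul x z)).
Proof. by rewrite /kGsub mul_catr mul_scaler. Qed.

Definition Sker g := Nset (kGsub (kGof K g) (kGof K 1%g)).

Lemma S1 : Sker 1%g.
Proof. by apply: N_eq N_nil _; rewrite sub_self. Qed.
Lemma S_mulV (x y : G) : Sker x -> Sker y -> Sker (x * y^-1)%g.
Proof.
move=> hx hy.
apply: (@N_eq (kGsub (kGmul (kGsub (kGof K x) (kGof K 1%g)) (kGof K y^-1%g))
                     (kGmul (kGsub (kGof K y) (kGof K 1%g)) (kGof K y^-1%g)))).
  by apply: N_sub; apply: N_mulr.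
apply/kGeqP => F; rewrite !ev_sub !ev_mul_of !ev_sub !ev_of mulgV mul1g; ring.
Qed.
Lemma S_conj (x y : G) : Sker x -> Sker (x ^ y)%g.
Proof.
move=> hx.
apply: (@N_eq (kGmul (kGmul (kGof K y^-1%g) (kGsub (kGof K x) (kGof K 1%g))) (kGof K y))).
  by apply/N_mulr/N_mull.
apply/kGeqP => F; rewrite !ev_mul_of ev_mul_ofl !ev_sub !ev_of mulg1 mulVg conjgE mulgA; ring.
Qed.
Lemma S_gen l : L l -> Sker l.
Proof.
move=> hl y; apply: inLs_eq (inLs_gen y hl) _.
rewrite /Pl /= kmul1l mul_subr kmul1r bar_sub; reflexivity.
Qed.

Lemma S_nc g : normal_closure L g -> Sker g.
Proof. move=> h; apply: (h Sker); [exact: S1|exact: S_mulV|exact: S_conj|exact: S_gen]. Qed.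

End Tool.

Lemma ev_map (K : fieldType) (G H : groupType) (f : G -> H) (F : H -> K) (x : kG K G) :
  ev F (kGmap f x) = ev (fun g => F (f g)) x.
Proof. by rewrite /ev /kGmap big_map. Qed.

#[global] Instance map_Proper (K : fieldType) (G H : groupType) (f : G -> H) :
  Proper (@kGeq K G ==> @kGeq K H) (@kGmap K G H f).
Proof. by move=> x y /kGeqP e; apply/kGeqP => F; rewrite !ev_map. Qed.

Section Map.
Variables (K : fieldType) (G H : groupType) (f : G -> H).
Hypothesis fM : forall x y : G, f (x * y)%g = (f x * f y)%g.
Implicit Types (x y z : kG K G).

Lemma f1 : f 1%g = 1%g.
Proof. by apply: (@mulIg _ (f 1%g)); rewrite -fM !mul1g. Qed.
Lemma fV g : f g^-1%g = (f g)^-1%g.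
Proof. by apply: (@mulIg _ (f g)); rewrite -fM !mulVg f1. Qed.


Lemma map_cat x y : kGmap f (x ++ y) = kGmap f x ++ kGmap f y.
Proof. by rewrite /kGmap seq.map_cat. Qed.
Lemma map_scale c (x : kG K G) : kGmap f (kGscale c x) = kGscale c (kGmap f x).
Proof. by rewrite /kGmap /kGscale -!map_comp. Qed.
Lemma map_star (x : kG K G) : kGmap f (kGstar x) = kGstar (kGmap f x).
Proof. by rewrite /kGmap /kGstar -!map_comp; apply: eq_map => p /=; rewrite fV. Qed.
Lemma map_mul (x y : kG K G) : kGmap f (kGmul x y) = kGmul (kGmap f x) (kGmap f y).
Proof.
rewrite /kGmap /kGmul map_allpairs allpairs_mapl allpairs_mapr.
by apply: eq_allpairs => p q /=; rewrite fM.
Qed.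
Lemma map_of g : kGmap f (kGof K g) = kGof K (f g).
Proof. by []. Qed.
Lemma map_sub (x y : kG K G) : kGmap f (kGsub x y) = kGsub (kGmap f x) (kGmap f y).
Proof. by rewrite /kGsub map_cat map_scale. Qed.
Lemma map_comm (x y : kG K G) : kGmap f (kGcomm x y) = kGcomm (kGmap f x) (kGmap f y).
Proof. by rewrite /kGcomm map_sub !map_mul. Qed.
Lemma map_bar (x : kG K G) : kGmap f (kGbar x) = kGbar (kGmap f x).
Proof. by rewrite /kGbar map_scale map_cat map_star. Qed.
Lemma map_flatten (s : seq (kG K G)) : kGmap f (flatten s) = flatten (map (kGmap f) s).
Proof. by rewrite /kGmap seq.map_flatten. Qed.

Lemma inI_map (z : kG K G) : inI z -> inI (kGmap f z).
Proof.
move=> [t [h e]].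
exists (map (fun q => (kGmap f q.1.1.1, kGmap f q.1.1.2, kGmap f q.1.2, kGmap f q.2)) t); split.
  move=> q /mapP [q' q't ->] /=; rewrite /selfadj -map_star.
  by have hq : kGeq (kGstar q'.1.2) q'.1.2 := h q' q't; rewrite hq.
rewrite e map_flatten -!map_comp; apply: flatten_eq => q _ /=.
by rewrite /Pg /= !map_mul map_comm.
Qed.

Variable L : G -> Prop.
Hypothesis fL : forall l, L l -> f l = 1%g.

Lemma inLs_map x : inLsharp L x -> inI (kGmap f x).
Proof.
move=> [t [h e]]; have := inI_map e; rewrite map_sub.
have -> : kGeq (kGmap f (flatten (map (@Pl K G) t))) [::].
  rewrite map_flatten -map_comp.
  have -> : kGeq (flatten (map (kGmap f \o (@Pl K G)) t)) (flatten (map (fun _ => [::]) t)).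
    apply: flatten_eq => q qt /=; rewrite /Pl map_mul map_sub !map_bar map_mul map_of.
    rewrite (fL (proj2 (h q qt))) kmul1r sub_self mul_nil; reflexivity.
  by elim: t {h e}.
have ee : kGeq (kGsub (kGmap f x) [::]) (kGmap f x).
  by apply/kGeqP => F; rewrite ev_sub ev_nil subr0.
by rewrite ee.
Qed.

Variable s : H -> G.
Hypothesis fs : forall h, f (s h) = h.
Hypothesis kerS : forall g, f g = 1%g -> Sker K L g.

Lemma map_lift (z : kG K H) : kGmap f (kGmap s z) = z.
Proof.
rewrite /kGmap -map_comp -[RHS]map_id; apply: eq_map => p /=; rewrite fs.
by case: p.
Qed.

Lemma N_lift z : Nset L (kGsub z (kGmap s (kGmap f z))).
Proof.
elim: z => [|p z IH]; first exact: N_nil.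
set g' := s (f p.1).
have e : kGeq (kGsub (p :: z) (kGmap s (kGmap f (p :: z))))
   (kGscale p.2 (kGmul (kGsub (kGof K (p.1 * g'^-1)%g) (kGof K 1%g)) (kGof K g'))
    ++ kGsub z (kGmap s (kGmap f z))).
  apply/kGeqP => F; rewrite ev_cat ev_scale ev_mul_of !ev_sub !ev_map !ev_cons ?ev_of /= !ev_nil.
  rewrite -mulgA mulVg mulg1 mul1g /= /g'; ring.
apply: N_eq (kGeq_sym e); apply: N_cat IH; apply/N_scale/N_mulr/kerS.
by rewrite fM fV fs mulgV.
Qed.

Lemma N_ker z : kGeq (kGmap f z) [::] -> Nset L z.
Proof.
move=> e; apply: N_eq (N_lift z) _.
have e' : kGeq (kGmap s (kGmap f z)) [::] by rewrite e.
by rewrite e'; apply/kGeqP => F; rewrite ev_sub ev_nil subr0.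
Qed.

End Map.

Lemma bar_selfadj (K : fieldType) (G : groupType) (b : kG K G) :
  (2%:R : K) != 0 -> selfadj b -> kGeq (kGbar b) b.
Proof.
move=> h2 hb; apply/kGeqP => F; rewrite ev_bar.
have -> : ev F (kGstar b) = ev F b by move: F; apply/kGeqP.
by field.
Qed.

Theorem mainTheorem3 (K : fieldType) (G H : groupType) (f : G -> H)
    (L : G -> Prop) :
  [pchar K] =i pred0 ->
  (forall x y : G, f (x * y)%g = (f x * f y)%g) ->
  (forall h : H, exists g : G, f g = h) ->
  (forall l, L l -> f l = 1%g) ->
  (forall g : G, normal_closure L g <-> f g = 1%g) ->
  forall x : kG K G, sharp x ->
    (inI (kGmap f x) <-> inLsharp L x).
Proof.
move=> hc fM hsurj fL hnc x hx.
have h2 : (2%:R : K) != 0.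
  move: (hc 2%N); rewrite !inE /=.
  by move=> ->.
have hsurj' : forall h, exists g, f g == h by move=> h; have [g <-] := hsurj h; exists g.
pose s h := xchoose (hsurj' h).
have fs : forall h, f (s h) = h by move=> h; exact/eqP/(xchooseP (hsurj' h)).
have kerS : forall g, f g = 1%g -> Sker K L g by move=> g e; apply: S_nc; apply/hnc.
split; last exact: inLs_map.
move=> [t [ht e]].
set tG := map (fun q => (kGmap s q.1.1.1, kGmap s q.1.1.2, kGbar (kGmap s q.1.2), kGmap s q.2)) t.
set x2 := flatten (map (@Pg K G) tG).
have I2 : inI x2 by exists tG; split => // q /mapP [q' _ ->]; exact: selfadj_bar.
have M2 : kGeq (kGmap f x2) (kGmap f x).
  rewrite e /x2 map_flatten // -!map_comp; apply: flatten_eq => q qt /=.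
  rewrite /Pg /= !map_mul // map_comm // map_bar // !map_lift // bar_selfadj //; last exact: ht.
have Nx : Nset L x.
  have Nd : Nset L (kGsub x x2).
    apply: (N_ker fM fs kerS).
    rewrite map_sub // M2 sub_self; reflexivity.
  apply: N_eq (N_cat Nd (N_I L I2)) _.
  by apply/kGeqP => F; rewrite ev_cat ev_sub; ring.
apply: inLs_AG (inLs_eq (Nx (kGof K 1%g)) _) _.
  by rewrite kmul1l.
rewrite /AGeq.
have -> : kGeq (kGsub x (kGbar x)) (kGscale (- 2%:R^-1) (kGsub (kGstar x) x)).
  by apply/kGeqP => F; rewrite ev_scale !ev_sub ev_bar; field.
exact: inI_scale.
Qed.
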